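(* Let $\Gamma$ be a connected connected-homogeneous locally-finite bipartite graph with bipartition $X\cup Y$. Let $x\in X$ and $y\in Y$ be adjacent, and define $A=\Gamma(x)\setminus\{y\}$ and $B=\Gamma(y)\setminus\{x\}$. Then $\Omega=\langle A\cup B\rangle$ (with bipartition $A\cup B$) is a finite homogeneous bipartite graph, and therefore is one of: a null bipartite graph, a complete bipartite graph, the complement of a perfect matching, or a perfect matching.
   Context: $\Gamma(v)$ denotes the set of neighbours of $v$ and $\langle S\rangle$ the induced subgraph on $S$. A bipartite graph with given bipartition $X\cup Y$ is a homogeneous bipartite graph if every isomorphism between finite induced subgraphs mapping vertices of $X$ to vertices of $X$ and vertices of $Y$ to vertices of $Y$ extends to an automorphism preserving $X$ and $Y$ setwise; it is a connected-homogeneous bipartite graph if this holds for isomorphisms between finite connected induced subgraphs. A null bipartite graph has no edges. The complement of a perfect matching on $2n$ vertices has parts $X',Y'$ of size $n$, a bijection $\eta:X'\to Y'$, and $x'\sim y'$ iff $y'\ne\eta(x')$. *)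

(* Defs.v *)
From Stdlib Require Import List Relations.
Import ListNotations.

Section Graphs.
Context {V : Type} (adj : V -> V -> Prop).

Definition is_bipartite (X Y : V -> Prop) : Prop :=
  (forall u v, adj u v -> adj v u) /\
  (forall u, ~ adj u u) /\
  (forall u, X u \/ Y u) /\
  (forall u, ~ (X u /\ Y u)) /\
  (forall u v, adj u v -> (X u /\ Y v) \/ (Y u /\ X v)).

Definition connected_graph : Prop :=
  forall u v, clos_refl_trans V adj u v.

Definition locally_finite : Prop :=
  forall v, exists l : list V, forall w, adj v w -> In w l.

Definition connected_in (S : list V) : Prop :=
  forall u v, In u S -> In v S ->
    clos_refl_trans V (fun a b => adj a b /\ In a S /\ In b S) u v.

Definition bip_partial_iso (X Y : V -> Prop) (S : list V) (f : V -> V) : Prop :=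
  (forall u v, In u S -> In v S -> f u = f v -> u = v) /\
  (forall u v, In u S -> In v S -> (adj u v <-> adj (f u) (f v))) /\
  (forall u, In u S -> (X u <-> X (f u)) /\ (Y u <-> Y (f u))).

Definition bip_automorphism (X Y : V -> Prop) (g : V -> V) : Prop :=
  (exists h : V -> V, (forall u, h (g u) = u) /\ (forall u, g (h u) = u)) /\
  (forall u v, adj u v <-> adj (g u) (g v)) /\
  (forall u, (X u <-> X (g u)) /\ (Y u <-> Y (g u))).

Definition extends_to_aut (X Y : V -> Prop) (S : list V) (f : V -> V) : Prop :=
  exists g, bip_automorphism X Y g /\ (forall u, In u S -> g u = f u).

Definition homogeneous_bipartite (X Y : V -> Prop) : Prop :=
  is_bipartite X Y /\
  forall (S : list V) (f : V -> V),
    bip_partial_iso X Y S f -> extends_to_aut X Y S f.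

Definition conn_homogeneous_bipartite (X Y : V -> Prop) : Prop :=
  is_bipartite X Y /\
  forall (S : list V) (f : V -> V),
    connected_in S -> connected_in (map f S) ->
    bip_partial_iso X Y S f -> extends_to_aut X Y S f.

Definition null_bipartite : Prop := forall u v, ~ adj u v.

Definition complete_bipartite (X Y : V -> Prop) : Prop :=
  forall u v, X u -> Y v -> adj u v.

Definition bij_between (X Y : V -> Prop) (eta : V -> V) : Prop :=
  (forall u, X u -> Y (eta u)) /\
  (forall u v, X u -> X v -> eta u = eta v -> u = v) /\
  (forall w, Y w -> exists u, X u /\ eta u = w).

Definition perfect_matching (X Y : V -> Prop) : Prop :=
  exists eta, bij_between X Y eta /\
    forall u v, X u -> Y v -> (adj u v <-> v = eta u).

Definition compl_perfect_matching (X Y : V -> Prop) : Prop :=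
  exists eta, bij_between X Y eta /\
    forall u v, X u -> Y v -> (adj u v <-> v <> eta u).

End Graphs.

Definition finite_type (T : Type) : Prop := exists l : list T, forall t, In t l.

Definition induced {V : Type} (adj : V -> V -> Prop) (P : V -> Prop)
  : {v : V | P v} -> {v : V | P v} -> Prop :=
  fun a b => adj (proj1_sig a) (proj1_sig b).

Definition lift_pred {V : Type} (P Q : V -> Prop) : {v : V | P v} -> Prop :=
  fun a => Q (proj1_sig a).

(* Main.v *)
Require Import Defs.
From Stdlib Require Import List Relations Classical ClassicalEpsilon ProofIrrelevance FinFun ListDec.
Import ListNotations.

Definition dec (P : Prop) : {P} + {~P} := excluded_middle_informative P.

Lemma sig_eq {V : Type} (W : V -> Prop) (s t : {v | W v}) :
  proj1_sig s = proj1_sig t -> s = t.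
Proof.
  destruct s as [v p], t as [w q]; simpl; intros ->.
  f_equal; apply proof_irrelevance.
Qed.

Definition sublist {V : Type} (W : V -> Prop) (l : list V) : list {v | W v} :=
  flat_map (fun v => match dec (W v) with left p => [exist _ v p] | right _ => [] end) l.

Lemma sublist_full {V : Type} (W : V -> Prop) (l : list V) :
  (forall v, W v -> In v l) -> forall t : {v | W v}, In t (sublist W l).
Proof.
  intros Hl [v p]. unfold sublist. apply in_flat_map. exists v; split; [now apply Hl|].
  destruct (dec (W v)) as [q|n]; [|contradiction].
  left; apply sig_eq; reflexivity.
Qed.

Lemma finite_sub {V : Type} (W : V -> Prop) (l : list V) :
  (forall v, W v -> In v l) -> finite_type {v | W v}.
Proof. intros Hl; exists (sublist W l); now apply sublist_full. Qed.

Lemma pigeon {T : Type} (P : T -> Prop) (F : T -> T) :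
  finite_type T ->
  (forall p, P p -> P (F p)) ->
  (forall p p', P p -> P p' -> F p = F p' -> p = p') ->
  forall ps, P ps -> (forall p, P p -> F p <> ps) -> False.
Proof.
  intros [l Hl] HP Hinj ps Hps Hmiss.
  assert (Hfin : Finite {x | P x}).
  { destruct (finite_sub P l (fun v _ => Hl v)) as [l' H']. exists l'; exact H'. }
  set (G := fun s : {x | P x} => exist P (F (proj1_sig s)) (HP _ (proj2_sig s))).
  assert (Hd : decidable_eq {x | P x}) by (intros a b; apply classic).
  assert (Hi : Injective G).
  { intros [a pa] [b pb] E. apply sig_eq. simpl. apply Hinj; auto.
    apply (f_equal (@proj1_sig _ _)) in E. exact E. }
  apply (@Endo_Injective_Surjective _ Hfin Hd G) in Hi.
  destruct (Hi (exist P ps Hps)) as [[a pa] E].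
  apply (f_equal (@proj1_sig _ _)) in E. simpl in E. exact (Hmiss a pa E).
Qed.

Definition has2N {T} (adj : T -> T -> Prop) u := exists a b, a <> b /\ adj u a /\ adj u b.
Definition has2NN {T} (adj : T -> T -> Prop) (R : T -> Prop) u :=
  exists a b, R a /\ R b /\ a <> b /\ ~ adj u a /\ ~ adj u b.

Definition swap {T : Type} (a b : T) (z : T) : T :=
  if dec (z = a) then b else if dec (z = b) then a else z.
Lemma swap_l {T} (a b : T) : swap a b a = b.
Proof. unfold swap; destruct (dec (a = a)); congruence. Qed.
Lemma swap_r {T} (a b : T) : swap a b b = a.
Proof. unfold swap; destruct (dec (b = a)); destruct (dec (b = b)); congruence. Qed.
Lemma swap_o {T} (a b z : T) : z <> a -> z <> b -> swap a b z = z.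
Proof. unfold swap; destruct (dec (z = a)); destruct (dec (z = b)); congruence. Qed.
Lemma swap_inv {T} (a b z : T) : swap a b (swap a b z) = z.
Proof.
  destruct (dec (z = a)) as [->|na]; [rewrite swap_l, swap_r; auto|].
  destruct (dec (z = b)) as [->|nb]; [rewrite swap_r, swap_l; auto|].
  rewrite (swap_o a b z na nb); exact (swap_o a b z na nb).
Qed.
Lemma swap_pred {T} (P : T -> Prop) a b z : P a -> P b -> P z -> P (swap a b z).
Proof. intros; unfold swap; destruct (dec (z = a)); destruct (dec (z = b)); auto. Qed.
Lemma inv_inj {T} (s : T -> T) : (forall z, s (s z) = z) -> forall u v, s u = s v -> u = v.
Proof. intros H u v E; rewrite <- (H u), <- (H v), E; auto. Qed.
Section GS.
Context {T : Type} (adj : T -> T -> Prop) (P Q : T -> Prop).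
Hypothesis Hbip : is_bipartite adj P Q.
Hypothesis Hfin : finite_type T.
Hypothesis Hhom : forall S f, bip_partial_iso adj P Q S f -> extends_to_aut adj P Q S f.

Lemma b_sym u v : adj u v -> adj v u.
Proof. destruct Hbip as [H _]; apply H. Qed.
Lemma b_PQ u : P u -> Q u -> False.
Proof. destruct Hbip as (_&_&_&H&_); intros; apply (H u); auto. Qed.
Lemma b_cov u : P u \/ Q u.
Proof. destruct Hbip as (_&_&H&_); apply H. Qed.
Lemma b_PP u v : P u -> P v -> ~ adj u v.
Proof. destruct Hbip as (_&_&_&_&H); intros pu pv a; destruct (H u v a) as [[_ q]|[q _]].
  - exact (b_PQ v pv q). - exact (b_PQ u pu q). Qed.
Lemma b_QQ u v : Q u -> Q v -> ~ adj u v.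
Proof. destruct Hbip as (_&_&_&_&H); intros pu pv a; destruct (H u v a) as [[q _]|[_ q]].
  - exact (b_PQ u q pu). - exact (b_PQ v q pv). Qed.
Lemma b_PadjQ u v : P u -> adj u v -> Q v.
Proof. intros pu a; destruct (b_cov v) as [pv|]; auto; exfalso; exact (b_PP u v pu pv a). Qed.
Lemma b_QadjP u v : Q u -> adj u v -> P v.
Proof. intros pu a; destruct (b_cov v) as [|pv]; auto; exfalso; exact (b_QQ u v pu pv a). Qed.

Lemma ext_perm (s : T -> T) :
  (forall u, P u -> P (s u)) -> (forall u v, P u -> P v -> s u = s v -> u = v) ->
  exists g, bip_automorphism adj P Q g /\ forall u, P u -> g u = s u.
Proof.
  intros HsP Hsi.
  destruct Hfin as [l Hl].
  set (S := filter (fun z => if dec (P z) then true else false) l).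
  assert (HS : forall z, In z S <-> P z).
  { intro z; unfold S; rewrite filter_In; destruct (dec (P z)); split; intros H.
    - exact p. - split; auto. - destruct H; discriminate. - contradiction. }
  destruct (Hhom S s) as [g [Hg Hgs]].
  - split; [|split].
    + intros u v iu iv; apply Hsi; apply HS; auto.
    + intros u v iu iv; apply HS in iu; apply HS in iv; split; intro a; exfalso.
      * eapply b_PP; [exact iu|exact iv|exact a].
      * eapply b_PP; [apply HsP; exact iu|apply HsP; exact iv|exact a].
    + intros u iu; apply HS in iu; split; split; intro; auto.
      * exfalso; eapply b_PQ; eauto.
      * exfalso; eapply b_PQ; [apply HsP; exact iu|eauto].
  - exists g; split; auto; intros u pu; apply Hgs, HS, pu.
Qed.
Lemma ext_permQ (s : T -> T) :
  (forall u, Q u -> Q (s u)) -> (forall u v, Q u -> Q v -> s u = s v -> u = v) ->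
  exists g, bip_automorphism adj P Q g /\ forall u, Q u -> g u = s u.
Proof.
  intros HsP Hsi.
  destruct Hfin as [l Hl].
  set (S := filter (fun z => if dec (Q z) then true else false) l).
  assert (HS : forall z, In z S <-> Q z).
  { intro z; unfold S; rewrite filter_In; destruct (dec (Q z)); split; intros H.
    - exact q. - split; auto. - destruct H; discriminate. - contradiction. }
  destruct (Hhom S s) as [g [Hg Hgs]].
  - split; [|split].
    + intros u v iu iv; apply Hsi; apply HS; auto.
    + intros u v iu iv; apply HS in iu; apply HS in iv; split; intro a; exfalso.
      * eapply b_QQ; [exact iu|exact iv|exact a].
      * eapply b_QQ; [apply HsP; exact iu|apply HsP; exact iv|exact a].
    + intros u iu; apply HS in iu; split; split; intro; auto.
      * exfalso; eapply b_PQ; eauto.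
      * exfalso; eapply b_PQ; [eauto|apply HsP; exact iu].
  - exists g; split; auto; intros u pu; apply Hgs, HS, pu.
Qed.

Lemma aut_adj g : bip_automorphism adj P Q g -> forall u v, adj u v <-> adj (g u) (g v).
Proof. intros (_&H&_); apply H. Qed.
Lemma aut_P g : bip_automorphism adj P Q g -> forall u, P u <-> P (g u).
Proof. intros (_&_&H) u; apply H. Qed.
Lemma aut_Q g : bip_automorphism adj P Q g -> forall u, Q u <-> Q (g u).
Proof. intros (_&_&H) u; apply H. Qed.
Lemma aut_inj g : bip_automorphism adj P Q g -> forall u v, g u = g v -> u = v.
Proof. intros ([h [H1 _]]&_&_) u v E; rewrite <- (H1 u), <- (H1 v), E; auto. Qed.
Lemma aut_surj g : bip_automorphism adj P Q g -> forall v, exists u, g u = v.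
Proof. intros ([h [_ H2]]&_&_) v; exists (h v); auto. Qed.

Lemma trans_P u v : P u -> P v -> exists g, bip_automorphism adj P Q g /\ g u = v.
Proof.
  intros pu pv; destruct (ext_perm (swap u v)) as [g [Hg E]].
  - intros; apply swap_pred; auto.
  - intros a b _ _; apply inv_inj, swap_inv.
  - exists g; split; auto; rewrite E; auto; apply swap_l.
Qed.
Lemma trans_Q u v : Q u -> Q v -> exists g, bip_automorphism adj P Q g /\ g u = v.
Proof.
  intros pu pv; destruct (ext_permQ (swap u v)) as [g [Hg E]].
  - intros; apply swap_pred; auto.
  - intros a b _ _; apply inv_inj, swap_inv.
  - exists g; split; auto; rewrite E; auto; apply swap_l.
Qed.

Lemma twins_Q q1 q2 : Q q1 -> Q q2 -> q1 <> q2 ->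
  (forall a, P a -> (adj a q1 <-> adj a q2)) ->
  null_bipartite adj \/ complete_bipartite adj P Q.
Proof.
  intros Q1 Q2 n12 Htw.
  assert (Hc : forall q, Q q -> forall a, P a -> (adj a q <-> adj a q1)).
  { intros q Qq a Pa. destruct (dec (q = q1)) as [->|nq]; [tauto|].
    destruct (ext_permQ (swap q2 q)) as [g [Hg E]].
    - intros; apply swap_pred; auto.
    - intros u v _ _; apply inv_inj, swap_inv.
    - assert (g1 : g q1 = q1) by (rewrite E; auto; apply swap_o; congruence).
      assert (g2 : g q2 = q) by (rewrite E; auto; apply swap_l).
      destruct (aut_surj g Hg a) as [b <-].
      assert (Pb : P b) by (apply (aut_P g Hg); auto).
      rewrite <- g2, <- (aut_adj g Hg), <- g1 at 1. rewrite <- (aut_adj g Hg).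
      symmetry; apply Htw; auto. }
  destruct (classic (exists a0, P a0 /\ ~ adj a0 q1)) as [[a0 [Pa0 na0]]|Hno].
  - left. assert (Hn : forall u v, P u -> Q v -> ~ adj u v).
    { intros u v Pu Qv a. destruct (trans_P a0 u Pa0 Pu) as [g [Hg E]].
      apply (Hc v Qv u Pu) in a.
      assert (Qg : Q (g q1)) by (apply (proj1 (aut_Q g Hg q1)); auto).
      apply (proj2 (Hc _ Qg u Pu)) in a. rewrite <- E, <- (aut_adj g Hg) in a. contradiction. }
    intros u v a. destruct (b_cov u) as [Pu|Qu].
    + exact (Hn u v Pu (b_PadjQ u v Pu a) a).
    + exact (Hn v u (b_QadjP u v Qu a) Qu (b_sym _ _ a)).
  - right. intros u v Pu Qv. apply (Hc v Qv u Pu).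
    apply NNPP; intro na; apply Hno; eauto.
Qed.
Definition autext (s : T -> T) : T -> T :=
  epsilon (inhabits (fun z : T => z))
    (fun g => bip_automorphism adj P Q g /\ forall u, P u -> g u = s u).

Lemma autext_spec (s : T -> T) :
  (forall u, P u -> P (s u)) -> (forall u v, s u = s v -> u = v) ->
  bip_automorphism adj P Q (autext s) /\ forall u, P u -> autext s u = s u.
Proof.
  intros H1 H2. unfold autext. apply epsilon_spec.
  apply ext_perm; auto.
Qed.

Lemma autext_memb (s : T -> T) q a :
  (forall u, P u -> P (s u)) -> (forall z, s (s z) = z) -> P a ->
  (adj a (autext s q) <-> adj (s a) q).
Proof.
  intros H1 H2 Pa. destruct (autext_spec s H1 (inv_inj s H2)) as [Hg E].
  rewrite <- (H2 a) at 1. rewrite <- E by auto. rewrite <- (aut_adj _ Hg). tauto.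
Qed.

Ltac neq := let E := fresh in intro E; first [subst; tauto | rewrite E in *; tauto | rewrite <- E in *; tauto].

Lemma construct_Q q0 p1 p2 r1 r2 : Q q0 -> P p1 -> P p2 -> P r1 -> P r2 ->
  p1 <> p2 -> r1 <> r2 -> adj p1 q0 -> adj p2 q0 -> ~ adj r1 q0 -> ~ adj r2 q0 ->
  exists F : T -> T, (forall p, P p -> Q (F p)) /\
    (forall p p', P p -> P p' -> F p = F p' -> p = p') /\
    exists qs, Q qs /\ forall p, P p -> F p <> qs.
Proof.
  intros Q0 P1 P2 R1 R2 n12 nr12 a1 a2 nr1 nr2.
  set (sg := fun p => if dec (adj p q0) then (if dec (p = p1) then (fun z : T => z) else swap p r1)
                      else swap p1 p).
  assert (sg_n : forall p, ~ adj p q0 -> sg p = swap p1 p).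
  { intros p n; unfold sg; destruct (dec (adj p q0)); tauto. }
  assert (sg_1 : sg p1 = fun z => z).
  { unfold sg; destruct (dec (adj p1 q0)); [|tauto]. destruct (dec (p1 = p1)); congruence. }
  assert (sg_a : forall p, adj p q0 -> p <> p1 -> sg p = swap p r1).
  { intros p a n; unfold sg; destruct (dec (adj p q0)); [|tauto]. destruct (dec (p = p1)); tauto. }
  assert (sgP : forall p, P p -> forall u, P u -> P (sg p u)).
  { intros p Pp u Pu; unfold sg; destruct (dec (adj p q0)); [destruct (dec (p = p1))|];
    auto; apply swap_pred; auto. }
  assert (sgI : forall p z, sg p (sg p z) = z).
  { intros p z; unfold sg; destruct (dec (adj p q0)); [destruct (dec (p = p1))|];
    auto; apply swap_inv. }
  set (F := fun p => autext (sg p) q0).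
  assert (memb : forall p a, P p -> P a -> (adj a (F p) <-> adj (sg p a) q0)).
  { intros p a Pp Pa; unfold F; apply autext_memb; auto. }
  exists F; split; [|split].
  - intros p Pp. destruct (autext_spec (sg p) (sgP p Pp) (inv_inj _ (sgI p))) as [Hg _].
    unfold F; apply (proj1 (aut_Q _ Hg q0)); auto.
  - assert (dist1 : forall p p', P p -> P p' -> p <> p' ->
       (~ adj p q0) \/ (adj p q0 /\ adj p' q0 /\ p <> p1 /\ p' <> p1) \/ (p = p1 /\ adj p' q0) ->
       exists a, P a /\ ~ (adj (sg p a) q0 <-> adj (sg p' a) q0)).
    { intros p p' Pp Pp' npp' [H|[[ap [ap' [n1 n1']]]|[-> ap']]].
      - destruct (classic (adj p' q0)) as [ap'|nap'].
        + exists p1; split; auto. rewrite sg_n by auto. rewrite swap_l.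
          destruct (dec (p' = p1)) as [->|n'].
          * rewrite sg_1; tauto.
          * rewrite sg_a by auto. rewrite swap_o by neq. tauto.
        + exists p; split; auto. rewrite !sg_n by auto. rewrite swap_r, swap_o by neq. tauto.
      - exists p; split; auto. rewrite !sg_a by auto. rewrite swap_l, swap_o by neq. tauto.
      - exists p'; split; auto. rewrite sg_1, sg_a by first [assumption | neq]. rewrite swap_l. tauto. }
    intros p p' Pp Pp' E. apply NNPP; intro npp'.
    assert (Hd : exists a, P a /\ ~ (adj (sg p a) q0 <-> adj (sg p' a) q0)).
    { destruct (classic (adj p q0)) as [ap|nap]; [|apply dist1; auto].
      destruct (classic (adj p' q0)) as [ap'|nap'].
      - destruct (dec (p = p1)) as [->|n1]; [apply dist1; auto; right; right; auto|].
        destruct (dec (p' = p1)) as [->|n1'].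
        + destruct (dist1 p1 p) as [a [Pa Ha]]; [auto|auto|neq|right; right; auto|]. exists a; split; auto; intro; apply Ha; tauto.
        + apply dist1; auto. right; left; auto.
      - destruct (dist1 p' p) as [a [Pa Ha]]; [auto|auto|neq|left; auto|]. exists a; split; auto; intro; apply Ha; tauto. }
    destruct Hd as [a [Pa Ha]]. apply Ha. rewrite <- memb, <- memb by auto. rewrite E; tauto.
  - set (ss := fun z => swap p1 r1 (swap p2 r2 z)).
    assert (ssP : forall u, P u -> P (ss u)) by (intros; unfold ss; apply swap_pred; auto; apply swap_pred; auto).
    assert (ssI : forall u v, ss u = ss v -> u = v).
    { intros u v E; unfold ss in E. apply (inv_inj _ (swap_inv p1 r1)) in E.
      apply (inv_inj _ (swap_inv p2 r2)) in E. exact E. }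
    destruct (autext_spec ss ssP ssI) as [Hg Eg].
    exists (autext ss q0); split; [apply (proj1 (aut_Q _ Hg q0)); auto|].
    assert (e1 : ss r1 = p1).
    { unfold ss. rewrite (swap_o p2 r2 r1) by neq. apply swap_r. }
    assert (e2 : ss r2 = p2).
    { unfold ss. rewrite swap_r. apply swap_o; neq. }
    assert (n1 : ~ adj p1 (autext ss q0)).
    { rewrite <- e1, <- Eg by auto. rewrite <- (aut_adj _ Hg); auto. }
    assert (n2 : ~ adj p2 (autext ss q0)).
    { rewrite <- e2, <- Eg by auto. rewrite <- (aut_adj _ Hg); auto. }
    intros p Pp E. fold F in E. rewrite <- E in n1, n2.
    destruct (classic (adj p q0)) as [ap|nap].
    + apply n1. apply memb; auto. destruct (dec (p = p1)) as [->|np].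
      * rewrite sg_1; auto.
      * rewrite sg_a by auto. rewrite swap_o by neq. auto.
    + apply n2. apply memb; auto. rewrite sg_n by auto. rewrite swap_o by neq. auto.
Qed.

Lemma aut_2N g u : bip_automorphism adj P Q g -> has2N adj u -> has2N adj (g u).
Proof.
  intros Hg (a&b&n&h1&h2). exists (g a), (g b); split; [intro E; apply n; eapply aut_inj; eauto|].
  split; apply (proj1 (aut_adj g Hg _ _)); auto.
Qed.
Lemma aut_2NN R g u : bip_automorphism adj P Q g -> (forall w, R w <-> R (g w)) ->
  has2NN adj R u -> has2NN adj R (g u).
Proof.
  intros Hg HR (a&b&ra&rb&n&h1&h2). exists (g a), (g b).
  split; [apply (proj1 (HR _)); auto|split; [apply (proj1 (HR _)); auto|split]].
  - intro E; apply n; eapply aut_inj; eauto.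
  - split; intro h; [apply h1|apply h2]; apply (proj2 (aut_adj g Hg _ _)); auto.
Qed.
Lemma inv2N_P p p' : P p -> P p' -> has2N adj p -> has2N adj p'.
Proof. intros pp pp' H; destruct (trans_P p p' pp pp') as [g [Hg <-]]; apply aut_2N; auto. Qed.
Lemma inv2N_Q p p' : Q p -> Q p' -> has2N adj p -> has2N adj p'.
Proof. intros pp pp' H; destruct (trans_Q p p' pp pp') as [g [Hg <-]]; apply aut_2N; auto. Qed.
Lemma inv2NN_P p p' : P p -> P p' -> has2NN adj Q p -> has2NN adj Q p'.
Proof. intros pp pp' H; destruct (trans_P p p' pp pp') as [g [Hg <-]]; apply aut_2NN; auto;
  apply (aut_Q g Hg). Qed.
Lemma inv2NN_Q p p' : Q p -> Q p' -> has2NN adj P p -> has2NN adj P p'.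
Proof. intros pp pp' H; destruct (trans_Q p p' pp pp') as [g [Hg <-]]; apply aut_2NN; auto;
  apply (aut_P g Hg). Qed.
Lemma invN_P p p' : P p -> P p' -> (exists q, adj p q) -> exists q, adj p' q.
Proof. intros pp pp' [q a]; destruct (trans_P p p' pp pp') as [g [Hg <-]]; exists (g q);
  apply (proj1 (aut_adj g Hg _ _)); auto. Qed.
Lemma invN_Q p p' : Q p -> Q p' -> (exists q, adj p q) -> exists q, adj p' q.
Proof. intros pp pp' [q a]; destruct (trans_Q p p' pp pp') as [g [Hg <-]]; exists (g q);
  apply (proj1 (aut_adj g Hg _ _)); auto. Qed.
Lemma invNN_P p p' : P p -> P p' -> (exists q, Q q /\ ~ adj p q) -> exists q, Q q /\ ~ adj p' q.
Proof. intros pp pp' [q [Qq a]]; destruct (trans_P p p' pp pp') as [g [Hg <-]]; exists (g q);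
  split; [apply (proj1 (aut_Q g Hg _)); auto|]; intro h; apply a; apply (proj2 (aut_adj g Hg _ _)); auto. Qed.
Lemma invNN_Q p p' : Q p -> Q p' -> (exists q, P q /\ ~ adj p q) -> exists q, P q /\ ~ adj p' q.
Proof. intros pp pp' [q [Qq a]]; destruct (trans_Q p p' pp pp') as [g [Hg <-]]; exists (g q);
  split; [apply (proj1 (aut_P g Hg _)); auto|]; intro h; apply a; apply (proj2 (aut_adj g Hg _ _)); auto. Qed.
End GS.

Lemma bip_sym {T} (adj : T -> T -> Prop) P Q : is_bipartite adj P Q -> is_bipartite adj Q P.
Proof.
  intros (H1&H2&H3&H4&H5); split; [exact H1|split; [exact H2|split; [|split]]].
  - intro u; destruct (H3 u); auto.
  - intros u [a b]; apply (H4 u); auto.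
  - intros u v a; destruct (H5 u v a); tauto.
Qed.

Lemma piso_sym {T} (adj : T -> T -> Prop) P Q S f :
  bip_partial_iso adj Q P S f -> bip_partial_iso adj P Q S f.
Proof. intros (H1&H2&H3); split; [exact H1|split; [exact H2|]]; intros u iu; split; apply H3; auto. Qed.

Lemma aut_sym {T} (adj : T -> T -> Prop) P Q g :
  bip_automorphism adj P Q g -> bip_automorphism adj Q P g.
Proof. intros (H1&H2&H3); split; [exact H1|split; [exact H2|]]; intros u; split; apply H3; auto. Qed.

Lemma hom_sym {T} (adj : T -> T -> Prop) P Q :
  (forall S f, bip_partial_iso adj P Q S f -> extends_to_aut adj P Q S f) ->
  forall S f, bip_partial_iso adj Q P S f -> extends_to_aut adj Q P S f.
Proof.
  intros H S f Hi. destruct (H S f (piso_sym _ _ _ _ _ Hi)) as [g [Hg E]].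
  exists g; split; auto. apply aut_sym; auto.
Qed.

Lemma classify {T : Type} (adj : T -> T -> Prop) (P Q : T -> Prop)
  (Hbip : is_bipartite adj P Q) (Hfin : finite_type T)
  (Hhom : forall S f, bip_partial_iso adj P Q S f -> extends_to_aut adj P Q S f) :
  null_bipartite adj \/ complete_bipartite adj P Q \/
  compl_perfect_matching adj P Q \/ perfect_matching adj P Q.
Proof.
  pose proof (bip_sym _ _ _ Hbip) as Hbip'. pose proof (hom_sym _ _ _ Hhom) as Hhom'.
  destruct (classic (null_bipartite adj)) as [Hn|Hn]; [left; auto|].
  destruct (classic (complete_bipartite adj P Q)) as [Hc|Hc]; [right; left; auto|].
  right; right.
  pose proof (b_sym adj P Q Hbip) as Hsym.
  assert (twQ : forall q1 q2, Q q1 -> Q q2 -> q1 <> q2 -> (forall a, P a -> (adj a q1 <-> adj a q2)) -> False).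
  { intros; destruct (twins_Q adj P Q Hbip Hfin Hhom q1 q2) as [h|h]; auto. }
  assert (twP : forall q1 q2, P q1 -> P q2 -> q1 <> q2 -> (forall a, Q a -> (adj a q1 <-> adj a q2)) -> False).
  { intros; destruct (twins_Q adj Q P Hbip' Hfin Hhom' q1 q2) as [h|h]; auto.
    apply Hc; intros u v pu qv; apply Hsym, h; auto. }
  assert (Hedge : exists p0 q0, P p0 /\ Q q0 /\ adj p0 q0).
  { apply NNPP; intro H; apply Hn; intros u v a. destruct (b_cov adj P Q Hbip u) as [pu|qu].
    - apply H; exists u, v; repeat split; auto; eapply b_PadjQ; eauto.
    - apply H; exists v, u; repeat split; auto; eapply b_QadjP; eauto. }
  assert (Hnedge : exists p0 q0, P p0 /\ Q q0 /\ ~ adj p0 q0).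
  { apply NNPP; intro H; apply Hc; intros u v pu qv. apply NNPP; intro na; apply H; eauto. }
  destruct Hedge as (pe & qe & Ppe & Qqe & ae).
  destruct Hnedge as (pn & qn & Ppn & Qqn & an).
  assert (nbP : forall p, P p -> exists q, adj p q).
  { intros p pp; apply (invN_P adj P Q Hbip Hfin Hhom pe p); eauto. }
  assert (nbQ : forall q, Q q -> exists p, adj q p).
  { intros q qq; apply (invN_Q adj P Q Hbip Hfin Hhom qe q); eauto. }
  assert (nnP : forall p, P p -> exists q, Q q /\ ~ adj p q).
  { intros p pp; apply (invNN_P adj P Q Hbip Hfin Hhom pn p); eauto. }
  assert (nnQ : forall q, Q q -> exists p, P p /\ ~ adj q p).
  { intros q qq; apply (invNN_Q adj P Q Hbip Hfin Hhom qn q); eauto.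
    exists pn; split; auto. }
  destruct (classic (has2N adj pe)) as [h2N|n2N].
  2:{
    right.
    assert (no2 : forall p, P p -> ~ has2N adj p).
    { intros p pp h; apply n2N; apply (inv2N_P adj P Q Hbip Hfin Hhom p pe); auto. }
    set (eta := fun p => epsilon (inhabits p) (fun q => adj p q)).
    assert (Heta : forall p, P p -> adj p (eta p)).
    { intros p pp; apply epsilon_spec; auto. }
    assert (Hu : forall p q, P p -> adj p q -> q = eta p).
    { intros p q pp a; apply NNPP; intro ne; apply (no2 p pp); exists q, (eta p); auto. }
    exists eta; split; [split; [|split]|].
    - intros p pp; eapply b_PadjQ; eauto.
    - intros u v pu pv E. apply NNPP; intro ne; apply (twP u v pu pv ne).
      intros b qb; split; intro a; apply Hsym in a; apply Hsym.
      + rewrite (Hu u b pu a), E; auto.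
      + rewrite (Hu v b pv a), <- E; auto.
    - intros w qw. destruct (nbQ w qw) as [p a]. assert (pp : P p) by (eapply b_QadjP; eauto).
      exists p; split; auto. symmetry; apply Hu; auto.
    - intros u v pu qv; split; intro h; [apply Hu; auto|subst; auto]. }
  destruct (classic (has2NN adj Q pe)) as [h2NN|n2NN].
  2:{
    left.
    assert (no2 : forall p, P p -> ~ has2NN adj Q p).
    { intros p pp h; apply n2NN; apply (inv2NN_P adj P Q Hbip Hfin Hhom p pe); auto. }
    set (eta := fun p => epsilon (inhabits p) (fun q => Q q /\ ~ adj p q)).
    assert (Heta : forall p, P p -> Q (eta p) /\ ~ adj p (eta p)).
    { intros p pp; apply epsilon_spec; auto. }
    assert (Hu : forall p q, P p -> Q q -> ~ adj p q -> q = eta p).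
    { intros p q pp qq a; apply NNPP; intro ne; apply (no2 p pp).
      exists q, (eta p); repeat split; auto; apply Heta; auto. }
    assert (Hiff : forall u v, P u -> Q v -> (adj u v <-> v <> eta u)).
    { intros u v pu qv; split; intro h.
      - intro E; subst; apply (Heta u pu); auto.
      - apply NNPP; intro na; apply h; apply Hu; auto. }
    exists eta; split; [split; [|split]|].
    - intros p pp; apply Heta; auto.
    - intros u v pu pv E. apply NNPP; intro ne; apply (twP u v pu pv ne).
      intros b qb; split; intro h; apply Hsym in h; apply Hsym.
      + apply (Hiff v b pv qb); rewrite <- E; apply (Hiff u b pu qb); auto.
      + apply (Hiff u b pu qb); rewrite E; apply (Hiff v b pv qb); auto.
    - intros w qw. destruct (nnQ w qw) as [p [pp a]].
      exists p; split; auto. symmetry; apply Hu; auto.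
    - auto. }
  exfalso.
  destruct h2N as (q1 & q2 & n12 & a1 & a2).
  destruct h2NN as (r1 & r2 & Qr1 & Qr2 & nr12 & b1 & b2).
  assert (Qq1 : Q q1) by exact (b_PadjQ adj P Q Hbip pe q1 Ppe a1).
  assert (Qq2 : Q q2) by exact (b_PadjQ adj P Q Hbip pe q2 Ppe a2).
  destruct (construct_Q adj Q P Hbip' Hfin Hhom' pe q1 q2 r1 r2) as (F & FP & Finj & ps & Pps & Fmiss);
    auto; try (intro h; apply Hsym in h; auto).
  destruct (classic (has2N adj q1)) as [k2N|k2N].
  2:{ apply (twQ q1 q2 Qq1 Qq2 n12). intros a pa.
      assert (Hk : forall q, Q q -> adj pe q -> forall a, adj a q <-> a = pe).
      { intros q qq ap a0; split; intro h.
        - apply NNPP; intro ne; apply k2N. apply (inv2N_Q adj P Q Hbip Hfin Hhom q q1); auto.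
          exists a0, pe; auto.
        - subst; auto. }
      rewrite (Hk q1 Qq1 a1), (Hk q2 Qq2 a2). tauto. }
  destruct (classic (has2NN adj P q1)) as [k2NN|k2NN].
  2:{ apply (twQ r1 r2 Qr1 Qr2 nr12). intros a pa.
      assert (Hk : forall q, Q q -> ~ adj pe q -> forall a, P a -> (adj a q <-> a <> pe)).
      { intros q qq ap a0 pa0; split; intro h.
        - intro E; subst; auto.
        - apply NNPP; intro ne; apply k2NN. apply (inv2NN_Q adj P Q Hbip Hfin Hhom q q1); auto.
          exists a0, pe; repeat split; auto; intro h'; apply Hsym in h'; auto. }
      rewrite (Hk r1 Qr1 b1 a pa), (Hk r2 Qr2 b2 a pa). tauto. }
  destruct k2N as (x1 & x2 & nx & c1 & c2).
  destruct k2NN as (y1 & y2 & Py1 & Py2 & ny & d1 & d2).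
  assert (Px1 : P x1) by exact (b_QadjP adj P Q Hbip q1 x1 Qq1 c1).
  assert (Px2 : P x2) by exact (b_QadjP adj P Q Hbip q1 x2 Qq1 c2).
  destruct (construct_Q adj P Q Hbip Hfin Hhom q1 x1 x2 y1 y2 Qq1 Px1 Px2 Py1 Py2 nx ny
    (Hsym _ _ c1) (Hsym _ _ c2)) as (G & GQ & Ginj & _);
    try (intro h; apply Hsym in h; auto).
  apply (pigeon P (fun p => F (G p)) Hfin) with (ps := ps); auto.
Qed.

Section Omega.
Context {V : Type} (adj : V -> V -> Prop) (X Y : V -> Prop).
Hypothesis Hch : conn_homogeneous_bipartite adj X Y.
Variables (x y : V).
Hypotheses (Hx : X x) (Hy : Y y) (Hxy : adj x y).

Let Hbip : is_bipartite adj X Y := proj1 Hch.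
Let A := fun v => adj x v /\ v <> y.
Let B := fun v => adj y v /\ v <> x.
Let W := fun v => A v \/ B v.

Lemma o_sym u v : adj u v -> adj v u.
Proof. apply (b_sym adj X Y Hbip). Qed.
Lemma o_nxx : ~ adj x x.
Proof. destruct Hbip as (_&H&_); apply H. Qed.
Lemma o_nyy : ~ adj y y.
Proof. destruct Hbip as (_&H&_); apply H. Qed.
Lemma o_xy : x <> y.
Proof. intro E; subst; apply (b_PQ adj X Y Hbip y); auto. Qed.
Lemma o_Wx : ~ W x.
Proof. intros [[a _]|[_ n]]; [apply o_nxx; auto|apply n; auto]. Qed.
Lemma o_Wy : ~ W y.
Proof. intros [[_ n]|[a _]]; [apply n; auto|apply o_nyy; auto]. Qed.
Lemma o_AY v : A v -> Y v.
Proof. intros [a _]; exact (b_PadjQ adj X Y Hbip x v Hx a). Qed.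
Lemma o_BX v : B v -> X v.
Proof. intros [a _]; exact (b_QadjP adj X Y Hbip y v Hy a). Qed.
Lemma o_AnX v : A v -> ~ X v.
Proof. intros a h; apply (b_PQ adj X Y Hbip v); auto; apply o_AY; auto. Qed.
Lemma o_BnY v : B v -> ~ Y v.
Proof. intros a h; apply (b_PQ adj X Y Hbip v); auto; apply o_BX; auto. Qed.
Lemma o_AB v : A v -> B v -> False.
Proof. intros a b; apply (o_AnX v a), o_BX, b. Qed.
Lemma o_adjx v : W v -> (adj x v <-> A v).
Proof.
  intros w; split; intro h.
  - split; auto; intro E; subst; apply o_Wy; auto.
  - destruct h; auto.
Qed.
Lemma o_adjy v : W v -> (adj y v <-> B v).
Proof.
  intros w; split; intro h.
  - split; auto; intro E; subst; apply o_Wx; auto.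
  - destruct h; auto.
Qed.

Lemma o_conn (L : list V) : (forall v, In v L -> W v) -> connected_in adj (x :: y :: L).
Proof.
  intros HL.
  set (S := x :: y :: L).
  set (R := fun a b => adj a b /\ In a S /\ In b S).
  assert (ix : In x S) by (left; auto).
  assert (iy : In y S) by (right; left; auto).
  assert (to_x : forall u, In u S -> clos_refl_trans V R u x /\ clos_refl_trans V R x u).
  { intros u iu. destruct iu as [<-|[<-|iu]].
    - split; apply rt_refl.
    - split; apply rt_step; repeat split; auto; apply o_sym; auto.
    - assert (iu' : In u S) by (right; right; auto).
      destruct (HL u iu) as [[a _]|[a _]].
      + split; apply rt_step; repeat split; auto; apply o_sym; auto.
      + split.
        * apply rt_trans with y; apply rt_step; repeat split; auto; apply o_sym; auto.
        * apply rt_trans with y; apply rt_step; repeat split; auto. }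
  intros u v iu iv. apply rt_trans with x; [apply to_x; auto|apply to_x; auto].
Qed.

Lemma o_bip : is_bipartite (induced adj W) (lift_pred W A) (lift_pred W B).
Proof.
  unfold induced, lift_pred.
  split; [|split; [|split; [|split]]].
  - intros u v; apply o_sym.
  - intros u; destruct Hbip as (_&H&_); apply H.
  - intros [u w]; simpl; exact w.
  - intros [u w] [a b]; simpl in *; apply (o_AB u); auto.
  - intros [u wu] [v wv]; simpl. intro a.
    destruct wu as [au|bu]; destruct wv as [av|bv]; auto.
    + exfalso; apply (b_QQ adj X Y Hbip u v); auto; apply o_AY; auto.
    + exfalso; apply (b_PP adj X Y Hbip u v); auto; apply o_BX; auto.
Qed.


Lemma o_hom : forall S f, bip_partial_iso (induced adj W) (lift_pred W A) (lift_pred W B) S f ->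
  extends_to_aut (induced adj W) (lift_pred W A) (lift_pred W B) S f.
Proof.
  intros S f (Fi & Fa & Fs). unfold induced, lift_pred in *.
  set (f' := fun v => match dec (W v) with left p => proj1_sig (f (exist W v p)) | right _ => v end).
  assert (fs : forall s, f' (proj1_sig s) = proj1_sig (f s)).
  { intros [v p]; unfold f'; simpl. destruct (dec (W v)) as [q|n]; [|contradiction].
    do 2 f_equal; apply sig_eq; reflexivity. }
  assert (fx : f' x = x) by (unfold f'; destruct (dec (W x)); [exfalso; apply o_Wx; auto|auto]).
  assert (fy : f' y = y) by (unfold f'; destruct (dec (W y)); [exfalso; apply o_Wy; auto|auto]).
  assert (Wf : forall s, W (proj1_sig (f s))) by (intro s; exact (proj2_sig (f s))).
  assert (Ws : forall s : {v | W v}, W (proj1_sig s)) by (intro s; exact (proj2_sig s)).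
  set (L := map (@proj1_sig _ _) S).
  assert (HL : forall v, In v L -> exists s, v = proj1_sig s /\ In s S).
  { intros v iv; apply in_map_iff in iv; destruct iv as [s [<- is]]; eauto. }
  assert (ax : forall s, In s S -> (adj x (proj1_sig s) <-> adj x (proj1_sig (f s)))).
  { intros s is. rewrite (o_adjx _ (Ws s)), (o_adjx _ (Wf s)). apply (Fs s is). }
  assert (ay : forall s, In s S -> (adj y (proj1_sig s) <-> adj y (proj1_sig (f s)))).
  { intros s is. rewrite (o_adjy _ (Ws s)), (o_adjy _ (Wf s)). apply (Fs s is). }
  assert (HXs : forall v, W v -> (X v <-> B v)).
  { intros v [a|b]; split; intro h; try tauto.
    - exfalso; apply (o_AnX v a h). - exfalso; apply (o_AB v a h).
    - apply o_BX; auto. }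
  assert (HYs : forall v, W v -> (Y v <-> A v)).
  { intros v [a|b]; split; intro h; try tauto.
    - apply o_AY; auto. - exfalso; apply (o_BnY v b h). - exfalso; apply (o_AB v h b). }
  pose proof (proj2 Hch) as Hc.
  destruct (Hc (x :: y :: L) f') as [g [Hg Eg]].
  - apply o_conn. intros v iv; destruct (HL v iv) as [s [-> _]]; apply Ws.
  - simpl; rewrite fx, fy; apply o_conn.
    intros v iv; apply in_map_iff in iv; destruct iv as [u [<- iu]].
    destruct (HL u iu) as [s [-> _]]; rewrite fs; apply Wf.
  - split; [|split].
    + intros u v iu iv; simpl in iu, iv.
      destruct iu as [<-|[<-|iu]]; destruct iv as [<-|[<-|iv]];
        rewrite ?fx, ?fy; auto;
        try (destruct (HL _ iu) as [s [-> is]]); try (destruct (HL _ iv) as [t [-> it]]);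
        rewrite ?fs; intro E.
      * exfalso; apply o_Wx; rewrite E; apply Wf.
      * exfalso; apply o_Wy; rewrite E; apply Wf.
      * exfalso; apply o_Wx; rewrite <- E; apply Wf.
      * exfalso; apply o_Wy; rewrite <- E; apply Wf.
      * f_equal; apply Fi; auto; apply sig_eq; auto.
    + intros u v iu iv; simpl in iu, iv.
      destruct iu as [<-|[<-|iu]]; destruct iv as [<-|[<-|iv]];
        rewrite ?fx, ?fy; try tauto;
        try (destruct (HL _ iu) as [s [-> is]]); try (destruct (HL _ iv) as [t [-> it]]);
        rewrite ?fs; auto.
      * split; intro h; apply o_sym; apply o_sym in h; apply (ax s is); auto.
      * split; intro h; apply o_sym; apply o_sym in h; apply (ay s is); auto.
    + intros u iu; simpl in iu. destruct iu as [<-|[<-|iu]]; rewrite ?fx, ?fy; try tauto.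
      destruct (HL _ iu) as [s [-> is]]; rewrite fs.
      rewrite (HXs _ (Ws s)), (HXs _ (Wf s)), (HYs _ (Ws s)), (HYs _ (Wf s)).
      split; apply (Fs s is).
  - assert (gx : g x = x) by (rewrite Eg; [auto|left; auto]).
    assert (gy : g y = y) by (rewrite Eg; [auto|right; left; auto]).
    destruct Hg as ([h [hg gh]] & Ga & Gs).
    assert (ginj : forall u v, g u = g v -> u = v).
    { intros u v E; rewrite <- (hg u), <- (hg v), E; auto. }
    assert (GA : forall v, A v <-> A (g v)).
    { intro v; unfold A; rewrite (Ga x v), gx. split; intros [a n]; split; auto.
      - intro E; apply n; apply ginj; rewrite gy; auto.
      - intro E; apply n; subst; auto. }
    assert (GB : forall v, B v <-> B (g v)).
    { intro v; unfold B; rewrite (Ga y v), gy. split; intros [a n]; split; auto.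
      - intro E; apply n; apply ginj; rewrite gx; auto.
      - intro E; apply n; subst; auto. }
    assert (gW : forall v, W v -> W (g v)).
    { intros v [a|b]; [left; exact (proj1 (GA v) a)|right; exact (proj1 (GB v) b)]. }
    assert (hW : forall v, W v -> W (h v)).
    { intros v w. destruct w as [a|b]; [left|right].
      - apply (proj2 (GA (h v))); rewrite gh; auto. - apply (proj2 (GB (h v))); rewrite gh; auto. }
    exists (fun s => exist W (g (proj1_sig s)) (gW _ (proj2_sig s))). split; [split; [|split]|].
    + exists (fun s => exist W (h (proj1_sig s)) (hW _ (proj2_sig s))).
      split; intro s; apply sig_eq; simpl; auto.
    + intros u v; simpl; apply Ga.
    + intros u; simpl; split; [apply GA|apply GB].
    + intros s is. apply sig_eq; simpl. rewrite Eg; [apply fs|].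
      right; right; apply in_map; auto.
Qed.
End Omega.

Theorem lemma4p5 (V : Type) (adj : V -> V -> Prop) (X Y : V -> Prop)
  (Hconn : connected_graph adj)
  (Hch : conn_homogeneous_bipartite adj X Y)
  (Hlf : locally_finite adj)
  (x y : V) (Hx : X x) (Hy : Y y) (Hxy : adj x y) :
  let A := fun v => adj x v /\ v <> y in
  let B := fun v => adj y v /\ v <> x in
  let W := fun v => A v \/ B v in
  let Omega := induced adj W in
  finite_type {v : V | W v} /\
  homogeneous_bipartite Omega (lift_pred W A) (lift_pred W B) /\
  (null_bipartite Omega \/
   complete_bipartite Omega (lift_pred W A) (lift_pred W B) \/
   compl_perfect_matching Omega (lift_pred W A) (lift_pred W B) \/
   perfect_matching Omega (lift_pred W A) (lift_pred W B)).
Proof.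
  intros A B W Omega.
  assert (Hfin : finite_type {v : V | W v}).
  { destruct (Hlf x) as [lx Hlx]; destruct (Hlf y) as [ly Hly].
    apply (finite_sub W (lx ++ ly)). intros v [[a _]|[a _]]; apply in_or_app; auto. }
  pose proof (o_bip adj X Y Hch x y Hx Hy) as Hb.
  pose proof (o_hom adj X Y Hch x y Hx Hy Hxy) as Hh.
  split; [exact Hfin|split; [split; [exact Hb|exact Hh]|]].
  apply classify; auto.
Qed.
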